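(* Let $B=B_0+B_1$ be a unital associative superalgebra and let $Z=Z(B)_0$ be the even part of its center. Assume that the nonzero elements of $Z$ are not zero divisors of $B$, and let $A=Z^{-1}B$ be the central closure of $B$, a superalgebra over the field $k=Z^{-1}Z$. If the superalgebra $A$ is simple and finite dimensional over $k$, then $B$ embeds, as a $Z$-module, into a free finitely generated $Z$-module.
   Context: A superalgebra is a $\mathbb{Z}_2$-graded algebra $B=B_0\oplus B_1$, where $B_0$ is the even part and $B_1$ is the odd part. For elements $x,y,z$ write $(x,y,z)=(xy)z-x(yz)$ and $[x,y]=xy-yx$. The center of a (super)algebra $B$ is $Z(B)=\{x\in B\mid (x,a,b)=(a,x,b)=(a,b,x)=[a,x]=0 \text{ for all } a,b\in B\}$, and $Z(B)_0=Z(B)\cap B_0$ is its even part. $Z^{-1}B$ denotes the localization of $B$ at $Z\setminus\{0\}$, which contains $B$ under the stated assumption, and $Z^{-1}Z$ is the field of fractions of $Z$. A superalgebra is simple if it has no graded ideals other than $0$ and itself and its product is nonzero. *)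

(* Defs.v *)
From HB Require Import structures.
From mathcomp Require Import all_boot all_order all_algebra.
Set Implicit Arguments. Unset Strict Implicit. Unset Printing Implicit Defensive.
Import GRing.Theory.
Local Open Scope ring_scope.

Definition ring_grading (R : pzRingType) (R0 R1 : R -> Prop) : Prop :=
  [/\ R0 0 /\ R1 0,
      (forall x y, R0 x -> R0 y -> R0 (x - y)) /\
      (forall x y, R1 x -> R1 y -> R1 (x - y)),
      (forall x, exists x0 x1, [/\ R0 x0, R1 x1 & x = x0 + x1]),
      (forall x, R0 x -> R1 x -> x = 0) &
      [/\ (forall x y, R0 x -> R0 y -> R0 (x * y)),
          (forall x y, R0 x -> R1 y -> R1 (x * y)),
          (forall x y, R1 x -> R0 y -> R1 (x * y)) &
          (forall x y, R1 x -> R1 y -> R0 (x * y))]].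

Definition superalgebra (F : fieldType) (B : algType F) (B0 B1 : B -> Prop)
  : Prop :=
  ring_grading B0 B1 /\
  (forall (c : F) x, B0 x -> B0 (c *: x)) /\
  (forall (c : F) x, B1 x -> B1 (c *: x)).

(* Center of an associative (super)algebra: associators vanish identically,
   so Z(B) = {x | [a, x] = 0 for all a}. *)
Definition center (R : pzRingType) (x : R) : Prop := forall a : R, a * x = x * a.

Definition even_center (R : pzRingType) (R0 : R -> Prop) (x : R) : Prop :=
  R0 x /\ center x.

(* iota : B -> A presents A as the localization Z^{-1}B at Z \ {0}
   (A contains B via the injective ring morphism iota). *)
Definition is_central_localization (B A : pzRingType) (Z : B -> Prop)
  (iota : {rmorphism B -> A}) : Prop :=
  [/\ injective iota,
      (forall z, Z z -> z != 0 ->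
         exists w : A, w * iota z = 1 /\ iota z * w = 1) &
      (forall a : A, exists z b, [/\ Z z, z != 0 & iota z * a = iota b])].

(* The induced grading on A = Z^{-1}B: A_i = Z^{-1} B_i. *)
Definition loc_part (B A : pzRingType) (Z : B -> Prop)
  (iota : {rmorphism B -> A}) (Bi : B -> Prop) (a : A) : Prop :=
  exists z b, [/\ Z z, z != 0, Bi b & iota z * a = iota b].

Definition loc_field (B A : pzRingType) (Z : B -> Prop)
  (iota : {rmorphism B -> A}) : A -> Prop := loc_part Z iota Z.

Definition ideal (R : pzRingType) (I : R -> Prop) : Prop :=
  [/\ I 0, (forall x y, I x -> I y -> I (x - y)),
      (forall a x, I x -> I (a * x)) & (forall a x, I x -> I (x * a))].

Definition graded_ideal (R : pzRingType) (R0 R1 : R -> Prop) (I : R -> Prop)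
  : Prop :=
  ideal I /\
  (forall x, I x -> exists x0 x1, [/\ R0 x0, R1 x1, I x0, I x1 & x = x0 + x1]).

Definition simple_super (R : pzRingType) (R0 R1 : R -> Prop) : Prop :=
  (exists a b : R, a * b != 0) /\
  (forall I, graded_ideal R0 R1 I ->
     (forall x, I x -> x = 0) \/ (forall x, I x)).

Definition fin_dim_over (R : pzRingType) (k : R -> Prop) : Prop :=
  exists s : seq R, forall a : R, exists cs : seq R,
    [/\ size cs = size s, (forall i, k cs`_i) &
        a = \sum_(i < size s) cs`_i * s`_i].

Definition embeds_in_free_fg (R : pzRingType) (Z : R -> Prop) : Prop :=
  exists (n : nat) (f : R -> 'I_n -> R),
    [/\ (forall x i, Z (f x i)),
        (forall x y i, f (x + y) i = f x i + f y i),
        (forall z x i, Z z -> f (z * x) i = z * f x i) &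
        injective f].

(* Main.v *)
Require Import Defs.
From HB Require Import structures.
From mathcomp Require Import all_boot all_order all_algebra.
From Stdlib Require Import Classical ClassicalEpsilon.
Import GRing.Theory.
Local Open Scope ring_scope.
Set Implicit Arguments. Unset Strict Implicit. Unset Printing Implicit Defensive.

Definition par (B : pzRingType) (B0 B1 : B -> Prop) (t : bool) : B -> Prop :=
  if t then B1 else B0.



Lemma par0 (B : pzRingType) (B0 B1 : B -> Prop) t :
  ring_grading B0 B1 -> par B0 B1 t 0.
Proof. by case=> [[h0 h1] _ _ _ _]; rewrite /par; case: t. Qed.

Lemma parB (B : pzRingType) (B0 B1 : B -> Prop) t x y :
  ring_grading B0 B1 -> par B0 B1 t x -> par B0 B1 t y -> par B0 B1 t (x - y).
Proof. by case=> _ [h0 h1] _ _ _; rewrite /par; case: t; auto. Qed.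

Lemma parN (B : pzRingType) (B0 B1 : B -> Prop) t x :
  ring_grading B0 B1 -> par B0 B1 t x -> par B0 B1 t (- x).
Proof. by move=> hg hx; rewrite -sub0r; apply: parB => //; apply: par0. Qed.

Lemma parD (B : pzRingType) (B0 B1 : B -> Prop) t x y :
  ring_grading B0 B1 -> par B0 B1 t x -> par B0 B1 t y -> par B0 B1 t (x + y).
Proof. by move=> hg hx hy; rewrite -[y]opprK; apply: parB => //; apply: parN. Qed.

Lemma parM (B : pzRingType) (B0 B1 : B -> Prop) t1 t2 x y :
  ring_grading B0 B1 -> par B0 B1 t1 x -> par B0 B1 t2 y ->
  par B0 B1 (t1 (+) t2) (x * y).
Proof. by case=> _ _ _ _ [m00 m01 m10 m11]; rewrite /par; case: t1; case: t2 => /=; auto. Qed.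

Lemma par_uniq (B : pzRingType) (B0 B1 : B -> Prop) t x :
  ring_grading B0 B1 -> par B0 B1 t x -> par B0 B1 (~~ t) x -> x = 0.
Proof. by case=> _ _ _ hu _; rewrite /par; case: t => /= h1 h2; apply: hu. Qed.

Lemma par_sum0 (B : pzRingType) (B0 B1 : B -> Prop) t x y :
  ring_grading B0 B1 -> par B0 B1 t x -> par B0 B1 (~~ t) y -> x + y = 0 ->
  x = 0 /\ y = 0.
Proof.
move=> hg hx hy hs.
have ey : y = - x by apply/eqP; rewrite -addr_eq0 addrC hs.
have hx' : par B0 B1 (~~ t) x by rewrite -[x]opprK -ey; apply: parN.
have x0 := par_uniq hg hx hx'.
by split=> //; rewrite ey x0 oppr0.
Qed.

Lemma one_B0 (B : pzRingType) (B0 B1 : B -> Prop) :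
  ring_grading B0 B1 -> B0 1.
Proof.
move=> hg; have [_ _ hd hu [m00 m01 m10 m11]] := hg.
have [e0 [e1 [h0 h1 he]]] := hd 1.
have eq1 : e1 = e0 * e1 + e1 * e1 by rewrite -mulrDl -he mul1r.
have d1 : e1 - e0 * e1 = e1 * e1 by rewrite {1}eq1 addrAC subrr add0r.
have A1 : e1 * e1 = 0.
  apply: hu; first exact: m11.
  by rewrite -d1; apply: (@parB _ B0 B1 true) => //; apply: m01.
have eq2 : e0 = e0 * e0 + e1 * e0 by rewrite -mulrDl -he mul1r.
have d2 : e0 - e0 * e0 = e1 * e0 by rewrite {1}eq2 addrAC subrr add0r.
have A2 : e1 * e0 = 0.
  apply: hu; last exact: m10.
  by rewrite -d2; apply: (@parB _ B0 B1 false) => //; apply: m00.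
have eq3 : e1 = e1 * e0 + e1 * e1 by rewrite -mulrDr -he mulr1.
by rewrite he eq3 A2 A1 !addr0.
Qed.


Lemma Z_comm (B : pzRingType) (B0 : B -> Prop) z a :
  even_center B0 z -> z * a = a * z.
Proof. by case=> _ h; rewrite h. Qed.

Lemma Z0 (B : pzRingType) (B0 B1 : B -> Prop) :
  ring_grading B0 B1 -> even_center B0 0.
Proof. by move=> hg; split; [exact: (@par0 _ B0 B1 false) | move=> a; rewrite mulr0 mul0r]. Qed.

Lemma Z1 (B : pzRingType) (B0 B1 : B -> Prop) :
  ring_grading B0 B1 -> even_center B0 1.
Proof. by move=> hg; split; [exact: one_B0 hg | move=> a; rewrite mulr1 mul1r]. Qed.

Lemma ZB (B : pzRingType) (B0 B1 : B -> Prop) x y :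
  ring_grading B0 B1 -> even_center B0 x -> even_center B0 y -> even_center B0 (x - y).
Proof.
move=> hg [hx cx] [hy cy]; split; first exact: (@parB _ B0 B1 false).
by move=> a; rewrite mulrBr mulrBl cx cy.
Qed.

Lemma ZN (B : pzRingType) (B0 B1 : B -> Prop) x :
  ring_grading B0 B1 -> even_center B0 x -> even_center B0 (- x).
Proof. by move=> hg hx; rewrite -sub0r; apply: ZB hg (Z0 hg) hx. Qed.

Lemma ZD (B : pzRingType) (B0 B1 : B -> Prop) x y :
  ring_grading B0 B1 -> even_center B0 x -> even_center B0 y -> even_center B0 (x + y).
Proof. by move=> hg hx hy; rewrite -[y]opprK; apply: ZB hg hx (ZN hg hy). Qed.

Lemma ZM (B : pzRingType) (B0 B1 : B -> Prop) x y :
  ring_grading B0 B1 -> even_center B0 x -> even_center B0 y -> even_center B0 (x * y).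
Proof.
move=> hg [hx cx] [hy cy]; split; first exact: (@parM _ B0 B1 false false).
by move=> a; rewrite mulrA cx -!mulrA cy.
Qed.

Definition addfn (B : pzRingType) (f : B -> B) := forall x y, f (x + y) = f x + f y.
Definition zlin (B : pzRingType) (Z : B -> Prop) (f : B -> B) :=
  forall z x, Z z -> f (z * x) = z * f x.
Definition spanZ (B : pzRingType) (Z : B -> Prop) (u : nat -> B) (r : nat) (y : B) :=
  exists zf : nat -> B, (forall i, Z (zf i)) /\ y = \sum_(i < r) zf i * u i.
Definition den (B : pzRingType) (Z : B -> Prop) (u : nat -> B) (r : nat) (y : B) :=
  exists c, [/\ Z c, c != 0 & spanZ Z u r (c * y)].

Lemma addf0 (B : pzRingType) (f : B -> B) : addfn f -> f 0 = 0.
Proof. move=> h; have e : f 0 + f 0 = f 0 + 0 by rewrite -h !addr0.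
exact: (addrI _ e). Qed.

Lemma addfN (B : pzRingType) (f : B -> B) x : addfn f -> f (- x) = - f x.
Proof. by move=> h; apply/eqP; rewrite -addr_eq0 -h addNr addf0. Qed.

Lemma addfB (B : pzRingType) (f : B -> B) x y : addfn f -> f (x - y) = f x - f y.
Proof. by move=> h; rewrite h addfN. Qed.

Lemma addf_sum (B : pzRingType) (f : B -> B) (I : Type) (r : seq I) (P : pred I) F :
  addfn f -> f (\sum_(i <- r | P i) F i) = \sum_(i <- r | P i) f (F i).
Proof. by move=> h; apply: (big_morph f h (addf0 h)). Qed.

Lemma lin_sum (B : pzRingType) (Z : B -> Prop) (f : B -> B) n (zf u : nat -> B) :
  addfn f -> zlin Z f -> (forall i, Z (zf i)) ->
  f (\sum_(i < n) zf i * u i) = \sum_(i < n) zf i * f (u i).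
Proof. by move=> ha hl hz; rewrite addf_sum //; apply: eq_bigr => i _; rewrite hl. Qed.

Lemma spanZ_map (B : pzRingType) (Z : B -> Prop) (f : B -> B) u r y :
  addfn f -> zlin Z f -> spanZ Z u r y -> spanZ Z (fun i => f (u i)) r (f y).
Proof. by move=> ha hl [zf [hz ->]]; exists zf; split => //; rewrite (lin_sum _ _ ha hl hz). Qed.

Lemma den_map (B : pzRingType) (Z : B -> Prop) (f : B -> B) u r y :
  addfn f -> zlin Z f -> den Z u r y -> den Z (fun i => f (u i)) r (f y).
Proof.
move=> ha hl [c [hc c0 hs]]; exists c; split => //.
by rewrite -hl //; apply: spanZ_map.
Qed.


Lemma reduce (B : pzRingType) (B0 B1 : B -> Prop) r (u zf : nat -> B) (j : 'I_r)
  (D : B -> B) :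
  ring_grading B0 B1 -> addfn D -> zlin (even_center B0) D ->
  (forall i, even_center B0 (zf i)) -> D (\sum_(i < r) zf i * u i) = 0 ->
  forall y, spanZ (even_center B0) u r y ->
  spanZ (even_center B0) (fun i => D (u (bump j i))) r.-1 (zf j * D y).
Proof.
move=> hg ha hl hz hv y [mu [hm ->]].
pose coef i := zf j * mu i - mu j * zf i.
have hc : forall i, even_center B0 (coef i).
  by move=> i; apply: ZB hg (ZM hg _ _) (ZM hg _ _).
have E : zf j * D (\sum_(i < r) mu i * u i) =
    \sum_(i < r) (zf j * mu i - mu j * zf i) * D (u i).
  rewrite (lin_sum _ _ ha hl hm).
  under [RHS]eq_bigr do rewrite mulrBl.
  rewrite sumrB.
  have h1 : \sum_(i < r) zf j * mu i * D (u i) = zf j * \sum_(i < r) mu i * D (u i).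
    by rewrite mulr_sumr; apply: eq_bigr => i _; rewrite mulrA.
  have h2 : \sum_(i < r) mu j * zf i * D (u i) = mu j * \sum_(i < r) zf i * D (u i).
    by rewrite mulr_sumr; apply: eq_bigr => i _; rewrite mulrA.
  by rewrite h1 h2 -(lin_sum _ _ ha hl hz) hv mulr0 subr0.
rewrite E (bigD1_ord j) //= -/(coef j).
have -> : coef j = 0 by rewrite /coef (Z_comm _ (hm j)) subrr.
rewrite mul0r add0r; exists (fun i => coef (bump j i)); split => //.
Qed.


Definition isproj (B : pzRingType) (B0 B1 : B -> Prop) (p0 : B -> B) :=
  forall x, B0 (p0 x) /\ B1 (x - p0 x).

Definition pq (B : pzRingType) (p0 : B -> B) (q : bool) (x : B) :=
  if q then x - p0 x else p0 x.

Lemma p0_uniq (B : pzRingType) (B0 B1 : B -> Prop) p0 x a :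
  ring_grading B0 B1 -> isproj B0 B1 p0 -> B0 a -> B1 (x - a) -> p0 x = a.
Proof.
move=> hg hp ha hxa; have [h0 h1] := hp x.
apply/eqP; rewrite -subr_eq0; apply/eqP.
apply: (@par_uniq _ B0 B1 false) => //=; first exact: (@parB _ B0 B1 false).
have -> : p0 x - a = (x - a) - (x - p0 x) by symmetry; rewrite opprB addrC addrA subrK.
exact: (@parB _ B0 B1 true).
Qed.

Lemma pq_par (B : pzRingType) (B0 B1 : B -> Prop) p0 q x :
  isproj B0 B1 p0 -> par B0 B1 q (pq p0 q x).
Proof. by move=> hp; case: q; have [] := hp x. Qed.

Lemma pq_sum (B : pzRingType) (p0 : B -> B) x : x = pq p0 false x + pq p0 true x.
Proof. by rewrite /pq addrC subrK. Qed.

Lemma p0_id (B : pzRingType) (B0 B1 : B -> Prop) p0 x :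
  ring_grading B0 B1 -> isproj B0 B1 p0 -> B0 x -> p0 x = x.
Proof.
move=> hg hp hx; apply: (p0_uniq hg hp hx).
rewrite subrr; exact: (@par0 _ B0 B1 true hg).
Qed.

Lemma pq_add (B : pzRingType) (B0 B1 : B -> Prop) p0 q :
  ring_grading B0 B1 -> isproj B0 B1 p0 -> addfn (pq p0 q).
Proof.
move=> hg hp.
have h0 : addfn p0.
  move=> x y; apply: (p0_uniq hg hp).
    by apply: (@parD _ B0 B1 false) => //; [exact: (hp x).1 | exact: (hp y).1].
  have -> : x + y - (p0 x + p0 y) = (x - p0 x) + (y - p0 y).
    by rewrite opprD addrACA.
  by apply: (@parD _ B0 B1 true) => //; [exact: (hp x).2 | exact: (hp y).2].
case: q => x y /=; rewrite /pq h0 //.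
by rewrite opprD addrACA.
Qed.

Lemma pq_lin (B : pzRingType) (B0 B1 : B -> Prop) p0 q :
  ring_grading B0 B1 -> isproj B0 B1 p0 -> zlin (even_center B0) (pq p0 q).
Proof.
move=> hg hp.
have h0 : zlin (even_center B0) p0.
  move=> z x [hz _]; apply: (p0_uniq hg hp).
    exact: (@parM _ B0 B1 false false) hg hz (hp x).1.
  rewrite -mulrBr; exact: (@parM _ B0 B1 false true) hg hz (hp x).2.
by case: q => z x hz /=; rewrite /pq h0 // mulrBr.
Qed.

Lemma comm_aux (B : pzRingType) (Y w v : B) :
  Y * w = w * Y -> Y * (w - v) = (w - v) * Y -> Y * v = v * Y.
Proof.
move=> h1; rewrite mulrBr mulrBl h1 => h.
apply: oppr_inj; exact: (addrI _ h).
Qed.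

Lemma p0_central (B : pzRingType) (B0 B1 : B -> Prop) p0 w :
  ring_grading B0 B1 -> isproj B0 B1 p0 -> (forall y, y * w = w * y) ->
  forall y, y * p0 w = p0 w * y.
Proof.
move=> hg hp hw y.
have [w0 w1] := hp w.
have [y0 y1] := hp y.
have e0 : p0 y * p0 w = p0 w * p0 y.
  have a1 : p0 (p0 y * w) = p0 y * p0 w.
    apply: (p0_uniq hg hp); first exact: (@parM _ B0 B1 false false).
    by rewrite -mulrBr; exact: (@parM _ B0 B1 false true).
  have a2 : p0 (w * p0 y) = p0 w * p0 y.
    apply: (p0_uniq hg hp); first exact: (@parM _ B0 B1 false false).
    by rewrite -mulrBl; exact: (@parM _ B0 B1 true false).
  by rewrite -a1 -a2 hw.
have e1 : (y - p0 y) * p0 w = p0 w * (y - p0 y).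
  have a1 : p0 ((y - p0 y) * w) = (y - p0 y) * (w - p0 w).
    apply: (p0_uniq hg hp); first exact: (@parM _ B0 B1 true true).
    rewrite -mulrBr subKr.
    exact: (@parM _ B0 B1 true false).
  have a2 : p0 (w * (y - p0 y)) = (w - p0 w) * (y - p0 y).
    apply: (p0_uniq hg hp); first exact: (@parM _ B0 B1 true true).
    rewrite -mulrBl subKr.
    exact: (@parM _ B0 B1 false true).
  have e : (y - p0 y) * (w - p0 w) = (w - p0 w) * (y - p0 y) by rewrite -a1 -a2 hw.
  exact: comm_aux (hw _) e.
rewrite -[y](subrK (p0 y)) mulrDl mulrDr e0 e1.
by rewrite [X in _ = X]addrC [X in X = _]addrC.
Qed.


Definition NZD (B : pzRingType) (B0 : B -> Prop) :=
  forall z, even_center B0 z -> z != 0 -> forall b, (z * b = 0 \/ b * z = 0) -> b = 0.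

Definition SIMP (B : pzRingType) (B0 B1 : B -> Prop) :=
  forall a, (B0 a \/ B1 a) -> a != 0 ->
  exists c, [/\ even_center B0 c, c != 0 &
    exists l : seq (B * B), c = \sum_(p <- l) p.1 * a * p.2].

Lemma NZD_mul (B : pzRingType) (B0 : B -> Prop) x y :
  NZD B0 -> even_center B0 x -> x != 0 -> y != 0 -> x * y != 0.
Proof.
move=> h hx x0 y0; apply/eqP => e; move/eqP: y0; apply.
by apply: (h x hx x0); left.
Qed.

Lemma addfn_comp (B : pzRingType) (f g : B -> B) :
  addfn f -> addfn g -> addfn (fun x => f (g x)).
Proof. by move=> hf hg x y; rewrite hg hf. Qed.

Lemma zlin_comp (B : pzRingType) (Z : B -> Prop) (f g : B -> B) :
  zlin Z f -> zlin Z g -> zlin Z (fun x => f (g x)).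
Proof. by move=> hf hg z x hz; rewrite hg // hf. Qed.

Definition sandw (B : pzRingType) (l : seq (B * B)) (y : B) :=
  \sum_(p <- l) p.1 * y * p.2.

Lemma sandw_add (B : pzRingType) (l : seq (B * B)) : addfn (sandw l).
Proof.
move=> x y; rewrite /sandw -big_split /=; apply: eq_bigr => p _.
by rewrite mulrDr mulrDl.
Qed.

Lemma sandw_lin (B : pzRingType) (B0 : B -> Prop) (l : seq (B * B)) :
  zlin (even_center B0) (sandw l).
Proof.
move=> z x hz; rewrite /sandw mulr_sumr; apply: eq_bigr => p _.
by rewrite !mulrA (Z_comm _ hz).
Qed.

Definition commf (B : pzRingType) (y w : B) := y * w - w * y.

Lemma commf_add (B : pzRingType) (y : B) : addfn (commf y).
Proof. by move=> a b; rewrite /commf mulrDr mulrDl opprD addrACA. Qed.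

Lemma commf_lin (B : pzRingType) (B0 : B -> Prop) (y : B) :
  zlin (even_center B0) (commf y).
Proof.
by move=> z x hz; rewrite /commf mulrBr !mulrA -(Z_comm y hz).
Qed.

Lemma core (B : pzRingType) (B0 B1 : B -> Prop) p0 :
  ring_grading B0 B1 -> isproj B0 B1 p0 -> NZD B0 -> SIMP B0 B1 ->
  forall r (T : B -> B) (u : nat -> B), addfn T -> zlin (even_center B0) T ->
  (forall x, den (even_center B0) u r (T x)) -> (exists x, T x != 0) ->
  exists T' : B -> B, [/\ addfn T', zlin (even_center B0) T',
    (forall x y, y * T' x = T' x * y) &
    exists x, even_center B0 (T' x) /\ T' x != 0].
Proof.
move=> hg hp hn hs r; elim: r => [|r IH] T u hT hl hd [x0 hx0].
  have [c [hc c0 [zf [_ e]]]] := hd x0.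
  move: e; rewrite big_ord0 => e.
  have ez : T x0 = 0 by apply: (hn c hc c0); left.
  by rewrite ez eqxx in hx0.
have [q hq] : exists q, pq p0 q (T x0) != 0.
  case: (eqVneq (pq p0 false (T x0)) 0) => [h0|h0]; last by exists false.
  by exists true; move: hx0; rewrite {1}(pq_sum p0 (T x0)) h0 add0r.
set a := pq p0 q (T x0).
have ha : B0 a \/ B1 a by have := pq_par q (T x0) hp; rewrite -/a /par; case: (q); auto.
have [c [hc c0 [l hcl]]] := hs a ha hq.
pose T2 := fun x => sandw l (pq p0 q (T x)).
have hT2 : addfn T2.
  apply: addfn_comp (sandw_add l) (addfn_comp (pq_add q hg hp) hT).
have hl2 : zlin (even_center B0) T2.
  exact: zlin_comp (@sandw_lin _ B0 l) (zlin_comp (pq_lin q hg hp) hl).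
pose u2 := fun i => sandw l (pq p0 q (u i)).
have hd2 : forall x, den (even_center B0) u2 r.+1 (T2 x).
  move=> x; apply: (den_map (sandw_add l) (@sandw_lin _ B0 l)).
  exact: (den_map (pq_add q hg hp) (pq_lin q hg hp)).
have eT2 : T2 x0 = c by rewrite hcl.
case: (classic (exists y x, commf y (T2 x) != 0)) => [[y [x1 hyx]]|hno].
  pose T3 := fun x => commf y (T2 x).
  have hT3 : addfn T3 by apply: addfn_comp (commf_add y) hT2.
  have hl3 : zlin (even_center B0) T3 by apply: zlin_comp (@commf_lin _ B0 y) hl2.
  have [c1 [hc1 c10 [zf [hzf ezf]]]] := hd2 x0.
  have [j hj] : exists j : 'I_r.+1, zf j != 0.
    apply: NNPP => hne; move: (NZD_mul hn hc1 c10 c0); rewrite -eT2 ezf.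
    rewrite big1 ?eqxx // => i _.
    case: (eqVneq (zf i) 0) => [->|hi]; first by rewrite mul0r.
    by case: hne; exists i.
  have hv : commf y (\sum_(i < r.+1) zf i * u2 i) = 0.
    by rewrite -ezf eT2 /commf (Z_comm _ (ZM hg hc1 hc)) subrr.
  apply: (IH T3 (fun i => commf y (u2 (bump j i)))) => //; last by exists x1.
  move=> x; have [c2 [hc2 c20 hsp]] := hd2 x.
  have := reduce j hg (commf_add y) (@commf_lin _ B0 y) hzf hv hsp.
  rewrite (@commf_lin _ B0 y _ _ hc2) mulrA => hsp'.
  exists (zf j * c2); split => //; first exact: ZM hg (hzf j) hc2.
  exact: NZD_mul hn (hzf j) hj c20.
exists T2; split => //.
  move=> x y; apply/eqP; rewrite -subr_eq0; apply/negPn/negP => hne.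
  by apply: hno; exists y, x.
by exists x0; rewrite eT2.
Qed.


Lemma vanish (B : pzRingType) (B0 : B -> Prop) m (e : nat -> B) (G : B -> B) :
  NZD B0 -> (forall x, den (even_center B0) e m x) ->
  addfn G -> zlin (even_center B0) G -> (forall i, (i < m)%N -> G (e i) = 0) ->
  forall b, G b = 0.
Proof.
move=> hn hsp ha hl he b.
have [c [hc c0 [zf [hz ez]]]] := hsp b.
apply: (hn c hc c0); left; rewrite -hl // ez (lin_sum _ _ ha hl hz).
by rewrite big1 // => i _; rewrite he ?mulr0.
Qed.

Lemma B_main (B : pzRingType) (B0 B1 : B -> Prop) p0 :
  ring_grading B0 B1 -> isproj B0 B1 p0 -> NZD B0 -> SIMP B0 B1 ->
  (exists x : B, x != 0) ->
  (exists m (e : nat -> B), forall x, den (even_center B0) e m x) ->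
  embeds_in_free_fg (even_center B0).
Proof.
move=> hg hp hn hs [xnz hxnz] [m [e he]].
have [T' [hT hl hc [x' [hx'Z hx'0]]]] :=
  core hg hp hn hs (T := id) (u := e) (fun x y => erefl) (fun z x _ => erefl) he
    (ex_intro _ xnz hxnz).
pose phi := fun x => p0 (T' x).
have hpa : addfn phi by apply: addfn_comp (pq_add false hg hp) hT.
have hpl : zlin (even_center B0) phi by apply: zlin_comp (pq_lin false hg hp) hl.
have hpZ : forall x, even_center B0 (phi x).
  move=> x; split; first exact: (hp _).1.
  by move=> a; apply: (p0_central hg hp (hc x) a).
have hpx' : phi x' != 0 by rewrite /phi (p0_id hg hp hx'Z.1).
pose F := fun (t : 'I_m * 'I_m * bool) x => phi (e t.1.1 * pq p0 t.2 x * e t.1.2).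
have hFa : forall t, addfn (F t).
  move=> t x y; rewrite /F (pq_add t.2 hg hp) mulrDr mulrDl; exact: hpa.
have hFl : forall t, zlin (even_center B0) (F t).
  move=> t z x hz; rewrite /F (pq_lin t.2 hg hp) // mulrA -(Z_comm (e t.1.1) hz).
  by rewrite -!mulrA hpl.
have key : forall d, (forall t, F t d = 0) -> d = 0.
  move=> d hd.
  have h2 : forall q b b', phi (b * pq p0 q d * b') = 0.
    move=> q b b'.
    have h1 : forall i, (i < m)%N -> forall b', phi (e i * pq p0 q d * b') = 0.
      move=> i hi; apply: (vanish hn he).
      - by move=> x y; rewrite mulrDr hpa.
      - by move=> z x hz; rewrite mulrA -(Z_comm (e i * pq p0 q d) hz) -mulrA hpl.
      move=> j hj; have := hd (Ordinal hi, Ordinal hj, q); done.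
    move: b; apply: (vanish hn he).
    - by move=> x y; rewrite !mulrDl hpa.
    - by move=> z x hz; rewrite -!mulrA hpl.
    by move=> i hi; apply: h1.
  case: (eqVneq d 0) => // dn0.
  have [q hq] : exists q, pq p0 q d != 0.
    case: (eqVneq (pq p0 false d) 0) => [h0|h0]; last by exists false.
    by exists true; move: dn0; rewrite {1}(pq_sum p0 d) h0 add0r.
  have ha : B0 (pq p0 q d) \/ B1 (pq p0 q d).
    by have := pq_par q d hp; rewrite /par; case: (q); auto.
  have [c [hcZ c0 [l hcl]]] := hs _ ha hq.
  have : phi x' = 0.
    apply: (hn c hcZ c0); left; rewrite -hpl // hcl mulr_suml (addf_sum _ _ _ hpa).
    by rewrite big1 // => p _; rewrite -mulrA h2.
  by move/eqP; rewrite (negbTE hpx').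
exists #|{: 'I_m * 'I_m * bool}|, (fun x k => F (enum_val k) x); split.
- by move=> x k; apply: hpZ.
- by move=> x y k; apply: hFa.
- by move=> z x k hz; apply: hFl.
move=> x y hxy; apply/eqP; rewrite -subr_eq0; apply/eqP; apply: key => t.
have := congr1 (fun f => f (enum_rank t)) hxy => /=; rewrite enum_rankK => ext.
by rewrite (addfB _ _ (hFa t)) ext subrr.
Qed.


Lemma loc_central (B A : pzRingType) (B0 : B -> Prop) (iota : {rmorphism B -> A}) z :
  is_central_localization (even_center B0) iota -> even_center B0 z ->
  forall a, iota z * a = a * iota z.
Proof.
move=> [hinj hinv hrep] hz a.
have [w [b [hw w0 hwb]]] := hrep a.
have [v [hv1 hv2]] := hinv w hw w0.
have ea : a = v * iota b by rewrite -hwb mulrA hv1 mul1r.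
have czv : iota z * v = v * iota z.
  rewrite -[RHS]mulr1 -hv2 !mulrA -[v * iota z * iota w]mulrA -rmorphM.
  by rewrite (Z_comm _ hz) rmorphM mulrA hv1 mul1r.
rewrite ea mulrA czv -mulrA -rmorphM (Z_comm _ hz) rmorphM mulrA.
by [].
Qed.

Definition LP (B A : pzRingType) (B0 B1 : B -> Prop) (iota : {rmorphism B -> A}) t :=
  loc_part (even_center B0) iota (par B0 B1 t).

Lemma LP0 (B A : pzRingType) (B0 B1 : B -> Prop) (iota : {rmorphism B -> A}) t :
  ring_grading B0 B1 -> NZD B0 -> (exists x : B, x != 0) -> LP B0 B1 iota t 0.
Proof.
move=> hg hn [x hx]; exists 1, 0; split.
- exact: Z1 hg.
- by apply/eqP => e; move/eqP: hx; apply; rewrite -[x]mul1r e mul0r.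
- exact: par0.
- by rewrite mulr0 rmorph0.
Qed.

Lemma LP_iota (B A : pzRingType) (B0 B1 : B -> Prop) (iota : {rmorphism B -> A}) t b :
  ring_grading B0 B1 -> (exists x : B, x != 0) -> par B0 B1 t b ->
  LP B0 B1 iota t (iota b).
Proof.
move=> hg [x hx] hb; exists 1, b; split => //.
- exact: Z1 hg.
- by apply/eqP => e; move/eqP: hx; apply; rewrite -[x]mul1r e mul0r.
- by rewrite rmorph1 mul1r.
Qed.

Lemma LP_add (B A : pzRingType) (B0 B1 : B -> Prop) (iota : {rmorphism B -> A}) t x y :
  ring_grading B0 B1 -> NZD B0 -> is_central_localization (even_center B0) iota ->
  LP B0 B1 iota t x -> LP B0 B1 iota t y -> LP B0 B1 iota t (x + y).
Proof.
move=> hg hn hloc [z1 [b1 [hz1 z10 hb1 e1]]] [z2 [b2 [hz2 z20 hb2 e2]]].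
exists (z1 * z2), (z2 * b1 + z1 * b2); split.
- exact: ZM hg hz1 hz2.
- exact: NZD_mul hn hz1 z10 z20.
- apply: parD => //.
    exact: (@parM _ B0 B1 false t) hg hz2.1 hb1.
  exact: (@parM _ B0 B1 false t) hg hz1.1 hb2.
rewrite mulrDr !rmorphD !rmorphM -e1 -e2.
by rewrite !mulrA {1}(loc_central hloc hz1 (iota z2)).
Qed.

Lemma LP_mul (B A : pzRingType) (B0 B1 : B -> Prop) (iota : {rmorphism B -> A}) t1 t2 x y :
  ring_grading B0 B1 -> NZD B0 -> is_central_localization (even_center B0) iota ->
  LP B0 B1 iota t1 x -> LP B0 B1 iota t2 y -> LP B0 B1 iota (t1 (+) t2) (x * y).
Proof.
move=> hg hn hloc [z1 [b1 [hz1 z10 hb1 e1]]] [z2 [b2 [hz2 z20 hb2 e2]]].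
exists (z1 * z2), (b1 * b2); split.
- exact: ZM hg hz1 hz2.
- exact: NZD_mul hn hz1 z10 z20.
- exact: parM.
rewrite !rmorphM -e1 -e2 -!mulrA; congr (_ * _).
by rewrite !mulrA (loc_central hloc hz2 x).
Qed.

Lemma LP_dec (B A : pzRingType) (B0 B1 : B -> Prop) (iota : {rmorphism B -> A}) :
  ring_grading B0 B1 -> is_central_localization (even_center B0) iota ->
  forall a, exists a0, LP B0 B1 iota false a0 /\ LP B0 B1 iota true (a - a0).
Proof.
move=> hg hloc a; have [hinj hinv hrep] := hloc.
have [w [b [hw w0 hwb]]] := hrep a.
have [v [hv1 hv2]] := hinv w hw w0.
have [_ _ hd _ _] := hg; have [b0 [b1 [h0 h1 eb]]] := hd b.
exists (v * iota b0); split.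
  by exists w, b0; split => //; rewrite mulrA hv2 mul1r.
exists w, b1; split => //; rewrite mulrBr hwb mulrA hv2 mul1r -rmorphB.
by rewrite eb addrC addKr.
Qed.


Definition Iset (B A : pzRingType) (iota : {rmorphism B -> A}) (a : B) (y : A) :=
  exists l : seq (A * A), y = \sum_(p <- l) p.1 * iota a * p.2.

Lemma acl (V : zmodType) (x y z w : V) : (x + y) + (z + w) = (x + w) + (y + z).
Proof. by rewrite [z + w]addrC addrACA. Qed.

Lemma Iset_ideal (B A : pzRingType) (iota : {rmorphism B -> A}) a :
  ideal (Iset iota a).
Proof.
split.
- by exists [::]; rewrite big_nil.
- move=> x y [l1 ->] [l2 ->]; exists (l1 ++ map (fun p => (- p.1, p.2)) l2).
  rewrite big_cat big_map /= -sumrN; congr (_ + _); apply: eq_bigr => p _.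
  by rewrite !mulNr.
- move=> b x [l ->]; exists (map (fun p => (b * p.1, p.2)) l).
  by rewrite big_map mulr_sumr; apply: eq_bigr => p _; rewrite !mulrA.
- move=> b x [l ->]; exists (map (fun p => (p.1, p.2 * b)) l).
  by rewrite big_map mulr_suml; apply: eq_bigr => p _; rewrite !mulrA.
Qed.

Lemma Iset_add (B A : pzRingType) (iota : {rmorphism B -> A}) a x y :
  Iset iota a x -> Iset iota a y -> Iset iota a (x + y).
Proof.
move=> [l1 ->] [l2 ->]; exists (l1 ++ l2); by rewrite big_cat.
Qed.

Lemma Iset_graded (B A : pzRingType) (B0 B1 : B -> Prop) (iota : {rmorphism B -> A}) s a :
  ring_grading B0 B1 -> NZD B0 -> is_central_localization (even_center B0) iota ->
  (exists x : B, x != 0) -> par B0 B1 s a ->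
  graded_ideal (LP B0 B1 iota false) (LP B0 B1 iota true) (Iset iota a).
Proof.
move=> hg hn hloc hnz ha; split; first exact: Iset_ideal.
have hia : LP B0 B1 iota s (iota a) by apply: LP_iota.
have term : forall p1 p2, exists E O, [/\ LP B0 B1 iota false E, LP B0 B1 iota true O,
    Iset iota a E, Iset iota a O & p1 * iota a * p2 = E + O].
  move=> p1 p2.
  have [q0 [hq0 hq1]] := LP_dec hg hloc p1.
  have [r0 [hr0 hr1]] := LP_dec hg hloc p2.
  set q1 := p1 - q0 in hq1; set r1 := p2 - r0 in hr1.
  have ep1 : p1 = q0 + q1 by rewrite /q1 addrC subrK.
  have ep2 : p2 = r0 + r1 by rewrite /r1 addrC subrK.
  clearbody q1 r1.
  have L : forall t1 t2 x y, LP B0 B1 iota t1 x -> LP B0 B1 iota t2 y ->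
      LP B0 B1 iota (t1 (+) s (+) t2) (x * iota a * y).
    by move=> t1 t2 x y hx hy; apply: LP_mul hg hn hloc (LP_mul hg hn hloc hx hia) hy.
  have I1 : forall x y, Iset iota a (x * iota a * y).
    by move=> x y; exists [:: (x, y)]; rewrite big_cons big_nil addr0.
  rewrite ep1 ep2 !mulrDl !mulrDr.
  case: (s) L => L.
    exists (q0 * iota a * r1 + q1 * iota a * r0), (q0 * iota a * r0 + q1 * iota a * r1).
    split.
    - by apply: LP_add hg hn hloc (L false true _ _ hq0 hr1) (L true false _ _ hq1 hr0).
    - by apply: LP_add hg hn hloc (L false false _ _ hq0 hr0) (L true true _ _ hq1 hr1).
    - by apply: Iset_add.
    - by apply: Iset_add.
    by rewrite acl addrC.
  exists (q0 * iota a * r0 + q1 * iota a * r1), (q0 * iota a * r1 + q1 * iota a * r0).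
  split.
  - by apply: LP_add hg hn hloc (L false false _ _ hq0 hr0) (L true true _ _ hq1 hr1).
  - by apply: LP_add hg hn hloc (L false true _ _ hq0 hr1) (L true false _ _ hq1 hr0).
  - by apply: Iset_add.
  - by apply: Iset_add.
  by rewrite acl.
move=> x [l ->]; elim: l => [|p l [x0 [x1 [h0 h1 i0 i1 e]]]].
  exists 0, 0; rewrite big_nil addr0; split => //.
  - exact: LP0.
  - exact: LP0.
  - by exists [::]; rewrite big_nil.
  - by exists [::]; rewrite big_nil.
have [E [O [hE hO iE iO eEO]]] := term p.1 p.2.
exists (E + x0), (O + x1); split.
- exact: LP_add.
- exact: LP_add.
- exact: Iset_add.
- exact: Iset_add.
by rewrite big_cons eEO e addrACA.
Qed.


Lemma one_neq0 (B : pzRingType) : (exists x : B, x != 0) -> (1 : B) != 0.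
Proof. by move=> [x hx]; apply/eqP => e; move/eqP: hx; apply; rewrite -[x]mul1r e mul0r. Qed.

Lemma clear_den (B A : pzRingType) (B0 B1 : B -> Prop) (iota : {rmorphism B -> A}) a :
  ring_grading B0 B1 -> NZD B0 -> is_central_localization (even_center B0) iota ->
  (exists x : B, x != 0) ->
  forall l : seq (A * A), exists c (l' : seq (B * B)),
    [/\ even_center B0 c, c != 0 &
      iota c * (\sum_(p <- l) p.1 * iota a * p.2) = iota (\sum_(p <- l') p.1 * a * p.2)].
Proof.
move=> hg hn hloc hnz; elim=> [|p l [c [l' [hc c0 e]]]].
  exists 1, [::]; split; [exact: Z1 hg | exact: one_neq0 | by rewrite !big_nil mulr0 rmorph0].
have [_ _ hrep] := hloc.
have [w1 [g1 [hw1 w10 e1]]] := hrep p.1.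
have [w2 [g2 [hw2 w20 e2]]] := hrep p.2.
exists (c * w1 * w2), ((c * g1, g2) :: map (fun q => (w1 * w2 * q.1, q.2)) l'); split.
- by apply: ZM hg (ZM hg hc hw1) hw2.
- by apply: NZD_mul hn (ZM hg hc hw1) (NZD_mul hn hc c0 w10) w20.
rewrite !big_cons big_map /= mulrDr rmorphD; congr (_ + _).
  have t1 : iota w2 * (p.1 * iota a * p.2) = p.1 * iota a * iota g2.
    by rewrite mulrA (loc_central hloc hw2 (p.1 * iota a)) -mulrA e2.
  rewrite !rmorphM -mulrA t1 !mulrA -[iota c * iota w1 * p.1]mulrA e1.
  by [].  
have -> : \sum_(j <- l') w1 * w2 * j.1 * a * j.2 = w1 * w2 * \sum_(j <- l') j.1 * a * j.2.
  by rewrite mulr_sumr; apply: eq_bigr => q _; rewrite !mulrA.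
have -> : c * w1 * w2 = w1 * w2 * c by rewrite -mulrA (Z_comm _ hc).
by rewrite rmorphM -mulrA e [RHS]rmorphM.
Qed.


Lemma SIMP_of (B A : pzRingType) (B0 B1 : B -> Prop) (iota : {rmorphism B -> A}) :
  ring_grading B0 B1 -> NZD B0 -> is_central_localization (even_center B0) iota ->
  (exists x : B, x != 0) ->
  simple_super (LP B0 B1 iota false) (LP B0 B1 iota true) -> SIMP B0 B1.
Proof.
move=> hg hn hloc hnz [_ hsimp] a ha a0.
have [hinj _ _] := hloc.
have [s hs] : exists s, par B0 B1 s a by case: ha => h; [exists false | exists true].
have hgi := Iset_graded hg hn hloc hnz hs.
case: (hsimp _ hgi) => [h0|hall].
  have e : iota a = 0.
    by apply: h0; exists [:: (1, 1)]; rewrite big_cons big_nil addr0 mul1r mulr1.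
  have : a = 0 by apply: hinj; rewrite e rmorph0.
  by move/eqP; rewrite (negbTE a0).
have [l hl] := hall 1.
have [c [l' [hc c0 e]]] := clear_den a hg hn hloc hnz l.
rewrite -hl mulr1 in e.
by exists c; split => //; exists l'; apply: hinj.
Qed.

Lemma spanZ_add (B : pzRingType) (B0 B1 : B -> Prop) u r y1 y2 :
  ring_grading B0 B1 -> spanZ (even_center B0) u r y1 -> spanZ (even_center B0) u r y2 ->
  spanZ (even_center B0) u r (y1 + y2).
Proof.
move=> hg [z1 [h1 ->]] [z2 [h2 ->]]; exists (fun i => z1 i + z2 i); split.
  by move=> i; apply: (ZD hg).
by rewrite -big_split; apply: eq_bigr => i _; rewrite mulrDl.
Qed.

Lemma spanZ_scale (B : pzRingType) (B0 B1 : B -> Prop) u r c y :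
  ring_grading B0 B1 -> even_center B0 c -> spanZ (even_center B0) u r y ->
  spanZ (even_center B0) u r (c * y).
Proof.
move=> hg hc [z [h ->]]; exists (fun i => c * z i); split.
  by move=> i; apply: (ZM hg).
by rewrite mulr_sumr; apply: eq_bigr => i _; rewrite mulrA.
Qed.

Lemma spanZ_single (B : pzRingType) (B0 B1 : B -> Prop) u r i h :
  ring_grading B0 B1 -> (i < r)%N -> even_center B0 h ->
  spanZ (even_center B0) u r (h * u i).
Proof.
move=> hg hi hh; exists (fun k => if k == i then h else 0); split.
  by move=> k; case: (k == i) => //; apply: Z0 hg.
rewrite (eq_bigr (fun k : 'I_r => if (k : nat) == i then h * u k else 0)); last first.
  by move=> k _; case: ifP => _ //; rewrite mul0r.
by rewrite -big_mkcond (big_ord1_eq _ (fun k => h * u k) i r) hi.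
Qed.

Lemma SPAN_of (B A : pzRingType) (B0 B1 : B -> Prop) (iota : {rmorphism B -> A}) :
  ring_grading B0 B1 -> NZD B0 -> is_central_localization (even_center B0) iota ->
  (exists x : B, x != 0) ->
  fin_dim_over (loc_field (even_center B0) iota) ->
  exists m (e : nat -> B), forall x, den (even_center B0) e m x.
Proof.
move=> hg hn hloc hnz [s hs].
have [hinj hinv hrep] := hloc.
have hch : forall i, exists g, exists w,
    [/\ even_center B0 w, w != 0 & iota w * s`_i = iota g].
  by move=> i; have [w [g [hw w0 e]]] := hrep s`_i; exists g, w.
pose g := fun i => proj1_sig (constructive_indefinite_description _ (hch i)).
have hg' : forall i, exists w, [/\ even_center B0 w, w != 0 & iota w * s`_i = iota (g i)].
  by move=> i; exact: (proj2_sig (constructive_indefinite_description _ (hch i))).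
exists (size s), g => x.
have [cs [_ hk ex]] := hs (iota x).
pose P := fun y : A => exists c y', [/\ even_center B0 c, c != 0,
  spanZ (even_center B0) g (size s) y' & iota c * y = iota y'].
have : P (\sum_(i < size s) cs`_i * s`_i).
  apply: (big_ind P).
  - exists 1, 0; split; [exact: Z1 hg | exact: one_neq0 | | by rewrite mulr0 rmorph0].
    exists (fun _ => 0); split; first by move=> _; apply: Z0 hg.
    by rewrite big1 // => i _; rewrite mul0r.
  - move=> a1 a2 [c1 [y1 [hc1 c10 hs1 e1]]] [c2 [y2 [hc2 c20 hs2 e2]]].
    exists (c1 * c2), (c2 * y1 + c1 * y2); split.
    + exact: ZM hg hc1 hc2.
    + exact: NZD_mul hn hc1 c10 c20.
    + by apply: spanZ_add hg (spanZ_scale hg hc2 hs1) (spanZ_scale hg hc1 hs2).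
    rewrite mulrDr rmorphD !rmorphM -e1 -e2 !mulrA.
    by rewrite (loc_central hloc hc1 (iota c2)).
  move=> i _.
  have [z [h [hz z0 hh ez]]] := hk i.
  have [w [hw w0 ew]] := hg' i.
  exists (z * w), (h * g i); split.
  - exact: ZM hg hz hw.
  - exact: NZD_mul hn hz z0 w0.
  - exact: spanZ_single hg (ltn_ord i) hh.
  rewrite !rmorphM -ez -ew -!mulrA; congr (_ * _).
  by rewrite !mulrA (loc_central hloc hw cs`_i).
rewrite -ex => -[c [y' [hc c0 hsp e]]].
exists c; split => //.
by have -> : c * x = y' by apply: hinj; rewrite rmorphM.
Qed.


Theorem theorem1 (F : fieldType) (B : algType F) (B0 B1 : B -> Prop)
  (A : pzRingType) (iota : {rmorphism B -> A}) :
  superalgebra B0 B1 ->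
  (forall z : B, even_center B0 z -> z != 0 ->
     forall b : B, (z * b = 0 \/ b * z = 0) -> b = 0) ->
  is_central_localization (even_center B0) iota ->
  simple_super (loc_part (even_center B0) iota B0)
               (loc_part (even_center B0) iota B1) ->
  fin_dim_over (loc_field (even_center B0) iota) ->
  embeds_in_free_fg (even_center B0).
Proof.
move=> [hg _] hn hloc hsimp hfd.
have hnz : exists x : B, x != 0.
  by have [_ _ hrep] := hloc; have [z [b [_ z0 _]]] := hrep 0; exists z.
have hd : forall x : B, exists x0, B0 x0 /\ B1 (x - x0).
  move=> x; have [_ _ hdec _ _] := hg; have [x0 [x1 [h0 h1 ->]]] := hdec x.
  by exists x0; split => //; rewrite addrC addKr.
have hp : isproj B0 B1 (fun x => proj1_sig (constructive_indefinite_description _ (hd x))).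
  by move=> x; exact: (proj2_sig (constructive_indefinite_description _ (hd x))).
exact: (B_main hg hp hn (SIMP_of hg hn hloc hnz hsimp) hnz (SPAN_of hg hn hloc hnz hfd)).
Qed.
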